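(* Let $T>0$ and let $\mathbb T$ be a nonempty closed $T$-periodic time scale. Then for every $x\in C^1_T$, $$\|x-\overline x\|_\infty\le \tfrac T2\,\|x^\Delta\|_\infty,$$ so that $k(\mathbb T)\le T/2$.
   Context: Time scale calculus in the sense of Hilger: $x^\Delta$ is the $\Delta$-derivative and $\int\cdot\,\Delta t$ the $\Delta$-integral. $\mathbb T$ is $T$-periodic if $\mathbb T+T=\mathbb T$. $C^1_T$ is the space of continuous $T$-periodic functions $x:\mathbb T\to\mathbb R$ that are $\Delta$-differentiable with continuous $\Delta$-derivative; $\|x\|_\infty=\sup_{[0,T]\cap\mathbb T}|x|$; $\overline x=\frac1T\int_0^Tx(t)\Delta t$. $k(\mathbb T)$ denotes the smallest constant $k\ge0$ such that $\|x-\overline x\|_\infty\le k\|x^\Delta\|_\infty$ for all $x\in C^1_T$. *)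

(* Defs.v *)
From HB Require Import structures.
From mathcomp Require Import all_boot all_order all_algebra.
From mathcomp Require Import all_classical all_reals all_analysis.
Set Implicit Arguments. Unset Strict Implicit. Unset Printing Implicit Defensive.
Import Order.TTheory GRing.Theory Num.Theory.
Import numFieldNormedType.Exports.
Local Open Scope classical_set_scope.
Local Open Scope ring_scope.

Section TimeScales.
Variable R : realType.
Implicit Types (TS : set R) (T t a b : R) (f x xd : R -> R).

Definition time_scale TS : Prop := TS !=set0 /\ closed TS.

Definition periodic_ts TS T : Prop := forall t, TS t <-> TS (t + T).

Definition fjump TS t : R :=
  if `[< exists s, TS s /\ t < s >] then inf [set s | TS s /\ t < s] else t.

Definition delta_deriv TS f t d : Prop :=
  forall e : R, 0 < e -> exists2 del : R, 0 < del &
    forall s, TS s -> `|t - s| < del ->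
      `|(f (fjump TS t) - f s) - d * (fjump TS t - s)| <= e * `|fjump TS t - s|.

Definition delta_antideriv TS F f : Prop :=
  forall t, TS t -> delta_deriv TS F t (f t).

Definition first_pt TS a : R := inf [set s | TS s /\ a <= s].

(* delta-integral  int_a^b f(t) Delta t  (= integral over [a,b) cap TS),
   computed via an antiderivative F (unique up to a constant) *)
Definition delta_integral TS f a b : R :=
  xget 0 [set I | exists F, delta_antideriv TS F f /\
                       I = F (first_pt TS b) - F (first_pt TS a)].

Definition ts_mean TS T x : R := delta_integral TS x 0 T / T.

Definition ts_supnorm TS T f : R :=
  sup [set `|f t| | t in TS `&` `[0, T]].

Definition C1T TS T x xd : Prop :=
  [/\ {within TS, continuous x},
      (forall t, TS t -> x (t + T) = x t),
      (forall t, TS t -> delta_deriv TS x t (xd t)) &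
      {within TS, continuous xd}].

Definition k_ts TS T : R :=
  inf [set k | 0 <= k /\ forall x xd, C1T TS T x xd ->
        ts_supnorm TS T (fun t => x t - ts_mean TS T x) <= k * ts_supnorm TS T xd].

End TimeScales.

(* Main.v *)
Require Import Defs.
From HB Require Import structures.
From mathcomp Require Import all_boot all_order all_algebra.
From mathcomp Require Import all_classical all_reals all_analysis.
From mathcomp Require Import lra ring.
From mathcomp Require Import measurable_realfun.
Set Implicit Arguments. Unset Strict Implicit. Unset Printing Implicit Defensive.
Import Order.TTheory GRing.Theory Num.Theory.
Import numFieldNormedType.Exports.
Local Open Scope classical_set_scope.
Local Open Scope ring_scope.

Section Basics.
Variable R : realType.
Variable TS : set R.
Variable T : R.
Hypothesis T0 : 0 < T.
Hypothesis TSne : TS !=set0.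
Hypothesis TScl : closed TS.
Hypothesis per : periodic_ts TS T.

Lemma TS_closedP p : (forall e : R, 0 < e -> exists s, TS s /\ `|p - s| < e) -> TS p.
Proof.
move=> H; apply: TScl => B /nbhs_ballP [e /= e0 sub].
have [s [Ts ps]] := H e e0; exists s; split => //; apply: sub.
by rewrite /ball /=.
Qed.

Lemma TS_shiftN t : TS t -> TS (t - T).
Proof. by move=> Ht; apply/(per (t - T)); rewrite subrK. Qed.

Lemma TS_shiftP t : TS t -> TS (t + T).
Proof. by move=> Ht; apply/(per t). Qed.

Lemma TS_shiftn t (n : nat) : TS t -> TS (t + n%:R * T) /\ TS (t - n%:R * T).
Proof.
move=> Ht; elim: n => [|n [IH1 IH2]]; first by rewrite mul0r addr0 subr0.
split.
  by rewrite -addn1 natrD mulrDl mul1r addrA; exact: TS_shiftP.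
by rewrite -addn1 natrD mulrDl mul1r opprD addrA; exact: TS_shiftN.
Qed.

Lemma ex_big (y : R) : exists n : nat, y < n%:R * T.
Proof.
exists (Num.Def.trunc (y / T)).+1.
by rewrite -ltr_pdivrMr // truncnS_gt.
Qed.

Lemma ex_below u : exists s, TS s /\ s <= u.
Proof.
have [t0 Ht0] := TSne.
have [n Hn] := ex_big (t0 - u).
exists (t0 - n%:R * T); split; first by case: (TS_shiftn n Ht0).
by rewrite lerBlDr -lerBlDl ltW.
Qed.

Lemma ex_above u : exists s, TS s /\ u <= s.
Proof.
have [t0 Ht0] := TSne.
have [n Hn] := ex_big (u - t0).
exists (t0 + n%:R * T); split; first by case: (TS_shiftn n Ht0).
by rewrite -lerBlDl ltW.
Qed.

Definition gb (u : R) := sup [set s | TS s /\ s <= u].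

Lemma gb_props u : [/\ TS (gb u), gb u <= u & forall s, TS s -> s <= u -> s <= gb u].
Proof.
have ne : [set s | TS s /\ s <= u] !=set0 by have [s Hs] := ex_below u; exists s.
have ub : has_ubound [set s | TS s /\ s <= u] by exists u => s [].
have hs : has_sup [set s | TS s /\ s <= u] by [].
split.
- apply: TS_closedP => e e0.
  have [s Es Hs] := sup_adherent e0 hs.
  have [Ts _] := Es.
  exists s; split => //.
  have : s <= gb u by apply: (sup_upper_bound hs).
  rewrite /gb => H1; rewrite ger0_norm ?subr_ge0 //.
  lra.
- by apply: ge_sup => // s [].
- by move=> s Ts su; apply: (sup_upper_bound hs).
Qed.

Lemma gb_TS t : TS t -> gb t = t.
Proof.
move=> Tt; have [_ H1 H2] := gb_props t; apply/le_anti.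
by rewrite H1 H2.
Qed.

Lemma gb_mono : {homo gb : u v / u <= v}.
Proof.
move=> u v uv; have [H1 H2 _] := gb_props u; have [_ _ H3] := gb_props v.
by apply: H3 => //; apply: le_trans uv.
Qed.

Definition fpt a := inf [set s | TS s /\ a <= s].

Lemma inf_props (E : set R) : E `<=` TS -> E !=set0 -> has_lbound E ->
  [/\ TS (inf E), lbound E (inf E) & forall s, lbound E s -> s <= inf E].
Proof.
move=> ET ne lb; have hi : has_inf E by [].
split.
- apply: TS_closedP => e e0.
  have [s Es Hs] := inf_adherent e0 hi.
  exists s; split; first exact: ET.
  have : inf E <= s by apply: ge_inf.
  move=> H1; rewrite distrC ger0_norm ?subr_ge0 //.
  lra.
- exact: ge_inf.
- by move=> s Hs; apply: lb_le_inf.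
Qed.

Lemma fpt_props a : [/\ TS (fpt a), a <= fpt a & forall s, TS s -> a <= s -> fpt a <= s].
Proof.
have ne : [set s | TS s /\ a <= s] !=set0 by have [s Hs] := ex_above a; exists s.
have [] := @inf_props [set s | TS s /\ a <= s] _ ne _.
- by move=> s [].
- by exists a => s [].
move=> H1 H2 H3; split => //.
- by apply: H3 => s [].
- by move=> s Ts as_; apply: H2.
Qed.

Lemma fjump_props t : [/\ TS (fjump TS t), t <= fjump TS t &
   forall s, TS s -> t < s -> fjump TS t <= s].
Proof.
have ne : [set s | TS s /\ t < s] !=set0.
  by have [s [Ts Hs]] := ex_above (t + 1); exists s; split => //; apply: lt_le_trans Hs; rewrite ltrDl.
have ex : exists s, TS s /\ t < s by case: ne => s Hs; exists s.
rewrite /fjump; case: asboolP => // _.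
have [] := @inf_props [set s | TS s /\ t < s] _ ne _.
- by move=> s [].
- by exists t => s [_ /ltW].
move=> H1 H2 H3; split => //.
- by apply: H3 => s [_ /ltW].
- by move=> s Ts ts; apply: H2.
Qed.

Lemma fpt_shift a : fpt (a + T) = fpt a + T.
Proof.
have [A1 A2 A3] := fpt_props a; have [B1 B2 B3] := fpt_props (a + T).
apply/le_anti/andP; split.
  by apply: B3; [exact: TS_shiftP | rewrite lerD2r].
rewrite -lerBrDr; apply: A3; first exact: TS_shiftN.
by rewrite lerBrDr.
Qed.

End Basics.

Lemma le_eps (R : realType) (x c : R) : 0 <= c -> (forall e, 0 < e -> x <= e * c) -> x <= 0.
Proof.
move=> c0 H; rewrite leNgt; apply/negP => x0.
move: c0; rewrite le_eqVlt => /orP[/eqP c0|cp].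
  by have := H 1 ltr01; rewrite -c0 mulr0 leNgt x0.
have := H (x / (c + c)) (divr_gt0 x0 (addr_gt0 cp cp)).
have -> : x / (c + c) * c = x / 2 by field; lra.
lra.
Qed.

Section MVI.
Variable R : realType.
Variable TS : set R.
Variable T : R.
Hypothesis T0 : 0 < T.
Hypothesis TSne : TS !=set0.
Hypothesis TScl : closed TS.
Hypothesis per : periodic_ts TS T.

Lemma sup_in_TS (E : set R) : E `<=` TS -> E !=set0 -> has_ubound E -> TS (sup E).
Proof.
move=> ET ne ub; have hs : has_sup E by [].
apply: (TS_closedP TScl) => e e0.
have [s Es Hs] := sup_adherent e0 hs.
exists s; split; first exact: ET.
have : s <= sup E by apply: (sup_upper_bound hs).
move=> H1; rewrite ger0_norm ?subr_ge0 //; lra.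
Qed.

Lemma fjump_rd t : TS t -> fjump TS t = t ->
  forall eps, 0 < eps -> exists s, [/\ TS s, t < s & s < t + eps].
Proof.
move=> Tt sE eps e0.
have [s [Ts Hs]] := ex_above T0 TSne per (t + 1).
have ex : exists s, TS s /\ t < s by exists s; split => //; lra.
move: sE; rewrite /fjump; case: asboolP => // _ sE.
have hi : has_inf [set s | TS s /\ t < s].
  by split; [case: ex => s' ?; exists s' | exists t => s' [_ /ltW]].
have [s' [Ts' ts'] Hs'] := inf_adherent e0 hi.
by exists s'; split => //; rewrite -sE.
Qed.

Lemma dd_jump f t d : TS t -> delta_deriv TS f t d ->
  f (fjump TS t) - f t = d * (fjump TS t - t).
Proof.
move=> Tt H; apply/eqP; rewrite -subr_eq0 -normr_le0.
apply: (@le_eps _ _ (`|fjump TS t - t|)) => // e e0.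
have [del del0 Hd] := H e e0.
by have := Hd t Tt; rewrite subrr normr0 => /(_ del0).
Qed.

Lemma dd_cont f t d : TS t -> delta_deriv TS f t d ->
  forall eta, 0 < eta -> exists2 del, 0 < del &
    forall s, TS s -> `|t - s| < del -> `|f s - f t| < eta.
Proof.
move=> Tt H eta eta0.
pose sg := fjump TS t; pose c := `|sg - t|.
have c0 : 0 <= c by exact: normr_ge0.
have e0 : 0 < eta / (2 * (c + 1)) by apply: divr_gt0 => //; lra.
have [d0 d00 Hd] := H _ e0.
have d1 : 0 < eta / (2 * (`|d| + 1)) by apply: divr_gt0 => //; have := normr_ge0 d; lra.
exists (Num.min d0 (Num.min 1 (eta / (2 * (`|d| + 1))))).
  by rewrite !lt_min d00 ltr01 d1.
move=> s Ts; rewrite !lt_min => /and3P[sd0 s1 sd1].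
have J := dd_jump Tt H.
have K := Hd s Ts sd0.
have E : f s - f t = - (f sg - f s - d * (sg - s)) + d * (s - t).
  by move: J; rewrite -/sg => J; rewrite mulrBr opprB; lra.
rewrite E; apply: (le_lt_trans (ler_normD _ _)); rewrite normrN normrM.
have T1 : `|sg - s| <= c + `|t - s|.
  have -> : sg - s = (sg - t) + (t - s) by ring. exact: ler_normD.
have T2 : eta / (2 * (c + 1)) * `|sg - s| <= eta / 2.
  apply: (le_trans (y := eta / (2 * (c + 1)) * (c + 1))).
    by apply: ler_wpM2l; [exact: ltW | lra].
  by rewrite le_eqVlt; apply/orP; left; apply/eqP; field; lra.
have T3 : `|d| * `|s - t| < eta / 2.
  rewrite distrC in sd1.
  have nd := normr_ge0 d; have nst := normr_ge0 (s - t).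
  have : (`|d| + 1) * `|s - t| < (`|d| + 1) * (eta / (2 * (`|d| + 1)))
    by rewrite ltr_pM2l //; lra.
  have -> : (`|d| + 1) * (eta / (2 * (`|d| + 1))) = eta / 2 by field; lra.
  nra.
lra.
Qed.

End MVI.

Section MVI2.
Variable R : realType.
Variable TS : set R.
Variable T : R.
Hypothesis T0 : 0 < T.
Hypothesis TSne : TS !=set0.
Hypothesis TScl : closed TS.
Hypothesis per : periodic_ts TS T.

Lemma mvi_eps f fd a b M eps : 0 < eps -> TS a -> TS b -> a <= b ->
  (forall t, TS t -> a <= t <= b -> delta_deriv TS f t (fd t)) ->
  (forall t, TS t -> a <= t < b -> fd t <= M) ->
  f b - f a <= (M + eps) * (b - a).
Proof.
move=> e0 Ta Tb ab Hd HM.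
pose K := M + eps.
pose A := [set t | [/\ TS t, a <= t, t <= b &
   forall s, TS s -> a <= s -> s <= t -> f s - f a <= K * (s - a)]].
have Aa : A a.
  split => // s Ts as_ sa; have -> : s = a by apply/le_anti; rewrite as_ sa.
  by rewrite !subrr mulr0.
have hs : has_sup A by split; [exists a | exists b => t [_ _ tb _]].
pose c := sup A.
have ac : a <= c by apply: (sup_upper_bound hs).
have cb : c <= b by apply: ge_sup; [exists a | move=> t [_ _ tb _]].
have Tc : TS c.
  apply: (sup_in_TS TScl); first by move=> t [].
    by exists a.
  by exists b => t [_ _ tb _].
have Pbelow : forall s, TS s -> a <= s -> s < c -> f s - f a <= K * (s - a).
  move=> s Ts as_ sc.
  have sc' : 0 < c - s by rewrite subr_gt0.
  have [t [_ _ _ Pt] Ht] := sup_adherent sc' hs.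
  apply: Pt => //; rewrite -/c in Ht; lra.
have Pc : f c - f a <= K * (c - a).
  rewrite leNgt; apply/negP => Hc.
  pose eta := (f c - f a - K * (c - a)) / 2.
  have eta0 : 0 < eta by rewrite /eta; lra.
  have [d0 d00 Hd0] := dd_cont Tc (Hd c Tc ltac:(by rewrite ac cb)) eta0.
  pose d1 := Num.min d0 (eta / (`|K| + 1)).
  have d10 : 0 < d1.
    by rewrite lt_min d00 /=; apply: divr_gt0 => //; have := normr_ge0 K; lra.
  have [t At Ht] := sup_adherent d10 hs.
  have [Tt at_ tb Pt] := At.
  have tc : t <= c by apply: (sup_upper_bound hs).
  have dist : `|c - t| < d1 by rewrite ger0_norm ?subr_ge0 //; rewrite -/c in Ht; lra.
  have dist0 : `|c - t| < d0 by apply: (lt_le_trans dist); rewrite /d1 ge_min lexx.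
  have dist1 : `|c - t| < eta / (`|K| + 1) by apply: (lt_le_trans dist); rewrite /d1 ge_min lexx orbT.
  have H1 := Hd0 t Tt dist0.
  have H2 := Pt t Tt at_ (lexx t).
  have H3 : `|K * (t - c)| < eta.
    rewrite normrM distrC.
    have nK := normr_ge0 K; have nct := normr_ge0 (c - t).
    have : (`|K| + 1) * `|c - t| < (`|K| + 1) * (eta / (`|K| + 1)) by rewrite ltr_pM2l //; lra.
    have -> : (`|K| + 1) * (eta / (`|K| + 1)) = eta by field; lra.
    nra.
  have H4 := ler_norm (f t - f c); have H5 := ler_norm (- (f t - f c)); rewrite normrN in H5.
  have H6 := ler_norm (K * (t - c)).
  have E : K * (t - a) = K * (c - a) - (- (K * (t - c))) by ring.
  rewrite E in H2; rewrite /eta in H3 H1; lra.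
have Ac : A c.
  split => // s Ts as_ sc; move: sc; rewrite le_eqVlt => /orP[/eqP ->//|]; exact: Pbelow.
have cbE : c = b.
  apply/le_anti; rewrite cb /=; rewrite leNgt; apply/negP => cb'.
  have dc := Hd c Tc ltac:(by rewrite ac cb).
  have [Tsg csg sgmin] := fjump_props T0 TSne TScl per c.
  have fdM : fd c <= M by apply: HM => //; rewrite ac cb'.
  move: csg; rewrite le_eqVlt => /orP[/eqP csg | csg].
  -
    have [d0 d00 Hd0] := dc eps e0.
    have md : 0 < Num.min d0 (b - c) by rewrite lt_min d00 subr_gt0 cb'.
    have [s [Ts cs sd]] := fjump_rd T0 TSne per Tc (esym csg) md.
    have m1 : Num.min d0 (b - c) <= d0 by rewrite ge_min lexx.
    have m2 : Num.min d0 (b - c) <= b - c by rewrite ge_min lexx orbT.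
    have : A s.
      split => //; first by lra.
        by lra.
      move=> s' Ts' as' s's.
      have [s'c|cs'] := leP s' c; first by case: Ac => _ _ _; apply.
      have dist : `|c - s'| < d0.
        rewrite distrC ger0_norm ?subr_ge0; last exact: ltW.
        by lra.
      have := Hd0 s' Ts' dist; rewrite -csg => H1.
      have H2 := ler_norm (- (f c - f s' - fd c * (c - s'))); rewrite normrN in H2.
      have hcs : `|c - s'| = s' - c by rewrite distrC ger0_norm // subr_ge0 ltW.
      rewrite hcs in H1.
      have H3 : fd c * (s' - c) <= M * (s' - c) by apply: ler_wpM2r => //; rewrite subr_ge0 ltW.
      have Pc' : f c - f a <= K * (c - a) by case: Ac => _ _ _; apply.
      rewrite /K; rewrite /K in Pc'; nra.
    move=> As; have : s <= c by apply: (sup_upper_bound hs).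
    lra.
  -
    pose sg := fjump TS c.
    have sgb : sg <= b by apply: sgmin.
    have : A sg.
      split => //; first by rewrite /sg; lra.
      move=> s' Ts' as' s's.
      have [s'c|cs'] := leP s' c; first by case: Ac => _ _ _; apply.
      have -> : s' = sg by apply/le_anti; rewrite s's sgmin.
      have J := dd_jump Tc dc.
      have H3 : fd c * (sg - c) <= M * (sg - c) by apply: ler_wpM2r => //; rewrite subr_ge0 ltW.
      have Pc' : f c - f a <= K * (c - a) by case: Ac => _ _ _; apply.
      rewrite /K; rewrite /K in Pc'; rewrite -/sg in J; nra.
    move=> Asg; have : sg <= c by apply: (sup_upper_bound hs).
    rewrite /sg; lra.
by case: Ac => _ _ _; apply; rewrite -?cbE.
Qed.
Lemma mvi f fd a b M : TS a -> TS b -> a <= b ->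
  (forall t, TS t -> a <= t <= b -> delta_deriv TS f t (fd t)) ->
  (forall t, TS t -> a <= t < b -> fd t <= M) ->
  f b - f a <= M * (b - a).
Proof.
move=> Ta Tb ab Hd HM.
have : f b - f a - M * (b - a) <= 0.
  apply: (@le_eps _ _ (b - a)); first by rewrite subr_ge0.
  move=> e e0; have := mvi_eps e0 Ta Tb ab Hd HM; lra.
lra.
Qed.

Lemma dd_opp f t d : delta_deriv TS f t d -> delta_deriv TS (fun s => - f s) t (- d).
Proof.
move=> H e e0; have [del del0 Hd] := H e e0; exists del => // s Ts ts.
have -> : - f (fjump TS t) - - f s - - d * (fjump TS t - s) =
  - (f (fjump TS t) - f s - d * (fjump TS t - s)) by ring.
by rewrite normrN; apply: Hd.
Qed.

Lemma mvi_low f fd a b m : TS a -> TS b -> a <= b ->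
  (forall t, TS t -> a <= t <= b -> delta_deriv TS f t (fd t)) ->
  (forall t, TS t -> a <= t < b -> m <= fd t) ->
  m * (b - a) <= f b - f a.
Proof.
move=> Ta Tb ab Hd Hm.
have := @mvi (fun s => - f s) (fun s => - fd s) a b (- m) Ta Tb ab.
have H1 : forall t, TS t -> a <= t <= b -> delta_deriv TS (fun s => - f s) t (- fd t).
  by move=> t Tt tt; apply: dd_opp; apply: Hd.
have H2 : forall t, TS t -> a <= t < b -> - fd t <= - m.
  by move=> t Tt tt; rewrite lerN2; apply: Hm.
move=> /(_ H1 H2); lra.
Qed.

Lemma mvi_abs f fd a b N : TS a -> TS b -> a <= b ->
  (forall t, TS t -> a <= t <= b -> delta_deriv TS f t (fd t)) ->
  (forall t, TS t -> a <= t < b -> `|fd t| <= N) ->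
  `|f b - f a| <= N * (b - a).
Proof.
move=> Ta Tb ab Hd HN.
have h1 := @mvi f fd a b N Ta Tb ab Hd.
have h2 := @mvi_low f fd a b (- N) Ta Tb ab Hd.
have H1 : forall t, TS t -> a <= t < b -> fd t <= N.
  by move=> t Tt tt; apply: le_trans (HN t Tt tt); apply: ler_norm.
have H2 : forall t, TS t -> a <= t < b -> - N <= fd t.
  by move=> t Tt tt; rewrite lerNl; apply: le_trans (HN t Tt tt); rewrite -normrN; apply: ler_norm.
have := h1 H1; have := h2 H2; rewrite ler_norml; lra.
Qed.

End MVI2.

Section Main.
Variable R : realType.
Variable TS : set R.
Variable T : R.
Hypothesis T0 : 0 < T.
Hypothesis TSne : TS !=set0.
Hypothesis TScl : closed TS.
Hypothesis per : periodic_ts TS T.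
Local Ltac slra := move: (T0) => ?; lra.

Lemma bounded_on (f : R -> R) a b : {within TS, continuous f} ->
  exists B, forall t, TS t -> a <= t <= b -> `|f t| <= B.
Proof.
move=> cf.
have cW : compact (`[a, b] `&` TS) by apply: compact_closedI => //; exact: segment_compact.
have cf' : {within `[a, b] `&` TS, continuous f}.
  by apply: continuous_subspaceW cf; move=> t [].
have := compact_bounded (continuous_compact cf' cW).
move=> [M [_ HM]].
exists (`|M| + 1) => t Tt tab.
have : (`|M| + 1) > M by have := ler_norm M; lra.
move/HM => /(_ (f t)); apply; exists t => //; split => //.

Qed.

Hypothesis Hex : forall x : R -> R, {within TS, continuous x} ->
  exists F, delta_antideriv TS F x.

Lemma t0_ex : exists t0, [/\ fpt TS 0 = t0, TS t0, 0 <= t0, t0 <= T &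
   forall s, TS s -> 0 <= s -> t0 <= s].
Proof.
move: (fpt_props T0 TSne TScl per 0); move: (fpt TS 0) => t0 [A1 A2 A3].
exists t0; split => //.
have [//|Tt0] := lerP t0 T.
have : t0 <= t0 - T by apply: A3; [exact: TS_shiftN | slra].
move=> H; slra.
Qed.

Lemma window t0 u : fpt TS 0 = t0 -> TS u -> 0 <= u -> u < t0 + T -> u <= T.
Proof.
move=> e Tu u0 ut; have [//|Tu'] := lerP u T.
have [t1 [e1 _ _ _ H]] := t0_ex; have e2 : t1 = t0 by rewrite -e1 e.
rewrite e2 in H.
have : t0 <= u - T by apply: H; [exact: TS_shiftN | slra].
move=> H'; slra.
Qed.

Lemma mainpart (x xd : R -> R) : C1T TS T x xd ->
  ts_supnorm TS T (fun t => x t - ts_mean TS T x) <= T / 2 * ts_supnorm TS T xd.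
Proof.
move=> [cx perx dx cxd].
have [t0 [et0 Tt0 t00 t0T t0min]] := t0_ex.
have Wne : (TS `&` `[0, T]) t0 by split => //=; rewrite in_itv /= t00 t0T.
pose N := ts_supnorm TS T xd.
have [B HB] := bounded_on 0 T cxd.
have hsN : has_sup [set `|xd t| | t in TS `&` `[0, T]].
  split; first by exists `|xd t0|; exists t0.
  exists B => _ [t [Tt tW] <-]; apply: HB => //; by move: tW => /=; rewrite in_itv.
have HN : forall t, TS t -> 0 <= t <= T -> `|xd t| <= N.
  by move=> t Tt tW; apply: (sup_upper_bound hsN); exists t => //; split => //=; rewrite in_itv.
have N0 : 0 <= N by apply: le_trans (HN t0 Tt0 ltac:(by rewrite t00 t0T)).
have Lip : forall a b, TS a -> TS b -> 0 <= a -> a <= b -> b <= (t0 + T) ->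
    `|x b - x a| <= N * (b - a).
  move=> a b Ta Tb a0 ab btau; apply: (mvi_abs T0 TSne TScl per (fd := xd)) => //.
    by move=> t Tt _; apply: dx.
  move=> t Tt /andP[at_ tb]; apply: HN => //.
  by rewrite (window et0 Tt) ?andbT; slra.
have D : forall t s, TS t -> TS s -> 0 <= s <= t -> t <= T ->
    `|x t - x s| <= N * (T / 2).
  move=> t s Tt Ts /andP[s0 st] tT.
  have [small|big] := lerP (t - s) (T / 2).
    apply: le_trans (Lip s t Ts Tt s0 st ltac:(slra)) _.
    by apply: ler_wpM2l.
  have e1 : x s = x (s + T) by rewrite perx.
  have e2 : x (t0 + T) = x t0 by rewrite perx.
  have L1 := Lip t0 s Tt0 Ts t00 (t0min s Ts s0) ltac:(slra).
  have L2 := Lip t (t0 + T) Tt (TS_shiftP per Tt0) ltac:(slra) ltac:(slra) (lexx _).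
  rewrite e2 in L2.
  have : `|x t - x s| <= `|x (t0 + T) - x t| + `|x s - x t0|.
    rewrite e2; have -> : x t - x s = - (x t0 - x t) - (x s - x t0) by ring.
    by apply: (le_trans (ler_normB _ _)); rewrite normrN.
  rewrite e2 => H.
  apply: (le_trans H); apply: le_trans (lerD L2 L1) _.
  have : N * (t0 + T - t + (s - t0)) <= N * (T / 2).
    by apply: ler_wpM2l => //; slra.
  have -> : N * (t0 + T - t) + N * (s - t0) = N * (t0 + T - t + (s - t0)) by ring.
  done.
have D' : forall t s, TS t -> TS s -> 0 <= t <= T -> 0 <= s <= T ->
    `|x t - x s| <= N * (T / 2).
  move=> t s Tt Ts /andP[t0' tT] /andP[s0 sT].
  have [st|ts] := lerP s t; first by apply: D => //; rewrite s0 st.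
  by rewrite distrC; apply: D => //; rewrite t0' ltW.
have [F dF] := Hex cx.
rewrite /ts_mean /delta_integral.
set P := [set I | exists F, delta_antideriv TS F x /\ I = F (fpt TS T) - F (fpt TS 0)].
have PI : P (xget 0 P).
  by apply: xgetPex; exists (F (fpt TS T) - F (fpt TS 0)); exists F.
move: PI; move: (xget 0 P) => I [G [dG eI]].
have eT : fpt TS T = t0 + T by rewrite -et0 -fpt_shift // add0r.
rewrite eT et0 in eI.
have bnd : forall t, TS t -> 0 <= t <= T -> `|x t - I / T| <= N * (T / 2).
  move=> t Tt tW.
  have inW : forall u, TS u -> t0 <= u < t0 + T -> `|x t - x u| <= N * (T / 2).
    move=> u Tu /andP[t0u ut]; apply: D' => //.
    by rewrite (window et0 Tu) ?andbT //; slra.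
  have dG' : forall u, TS u -> t0 <= u <= t0 + T -> delta_deriv TS G u (x u).
    by move=> u Tu _; apply: dG.
  have Tt0T := TS_shiftP per Tt0.
  have low := mvi_low T0 TSne TScl per (m := x t - N * (T / 2)) Tt0 Tt0T ltac:(slra) dG'.
  have up := mvi T0 TSne TScl per (M := x t + N * (T / 2)) Tt0 Tt0T ltac:(slra) dG'.
  have H1 : forall u, TS u -> t0 <= u < t0 + T -> x t - N * (T / 2) <= x u.
    move=> u Tu uu; have := inW u Tu uu; rewrite ler_norml; slra.
  have H2 : forall u, TS u -> t0 <= u < t0 + T -> x u <= x t + N * (T / 2).
    move=> u Tu uu; have := inW u Tu uu; rewrite ler_norml; slra.
  have := low H1; have := up H2.
  have -> : t0 + T - t0 = T by ring.
  rewrite -eI => h1 h2.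
  have eIT : I / T * T = I by field; slra.
  rewrite ler_norml.
  have NT0 : 0 <= N * (T / 2) by apply: mulr_ge0 => //; slra.
  apply/andP; split.
  - rewrite -(ler_pM2r T0); rewrite mulrBl eIT; slra.
  - rewrite -(ler_pM2r T0); rewrite mulrBl eIT; slra.
rewrite /ts_supnorm; apply: ge_sup; first by exists `|x t0 - I / T|; exists t0.
move=> _ [t [Tt tW] <-].
have tW' : 0 <= t <= T by move: tW => /=; rewrite in_itv.
by apply: (le_trans (bnd t Tt tW')); rewrite mulrC.
Qed.

End Main.

Section Anti.
Variable R : realType.
Variable TS : set R.
Variable T : R.
Hypothesis T0 : 0 < T.
Hypothesis TSne : TS !=set0.
Hypothesis TScl : closed TS.
Hypothesis per : periodic_ts TS T.
Variable x : R -> R.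
Hypothesis cx : {within TS, continuous x}.

Local Notation mu := (@lebesgue_measure R).
Definition xt (u : R) := x (gb TS u).

Lemma cont_ed t : TS t -> forall e, 0 < e -> exists2 d, 0 < d &
   forall p, TS p -> `|t - p| < d -> `|x t - x p| <= e.
Proof.
move=> Tt e e0.
have H := (subspace_continuousP TS x).1 cx t Tt.
have := cvgr_dist_le _ _ H _ e0; rewrite near_withinE => /(_ (within_filter _ _)) /nbhs_ballP [d d0 Hd].
by exists d => // p Tp tp; apply: Hd.
Qed.

Lemma mxt (D : set R) : measurable D -> measurable_fun D xt.
Proof.
move=> mD; apply: (measurable_comp (F := TS)).
- exact: closed_measurable.
- by move=> _ [u _ <-]; have [] := gb_props T0 TSne TScl per u.
- by apply: subspace_continuous_measurable_fun => //; exact: closed_measurable.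
- apply: nondecreasing_measurable => //; exact: (gb_mono T0 TSne TScl per).
Qed.

Lemma xt_bound a b : exists B, forall u, a <= u <= b -> `|xt u| <= B.
Proof.
have [B HB] := bounded_on TScl (gb TS a) b cx.
exists B => u /andP[au ub]; apply: HB.
  by have [] := gb_props T0 TSne TScl per u.
have [_ gu _] := gb_props T0 TSne TScl per u.
by rewrite (gb_mono T0 TSne TScl per au) /= (le_trans gu ub).
Qed.

Lemma int_bounded (f : R -> R) (a b : R) : measurable_fun `[a, b[ f ->
  (exists B, forall u, a <= u < b -> `|f u| <= B) ->
  mu.-integrable `[a, b[ (EFin \o f).
Proof.
move=> mf [B HB]; apply: measurable_bounded_integrable => //.
- have := @lebesgue_measure_itv R `[a, b[%R => /= ->; case: ifP => _ //; rewrite -EFinD ltry //=.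
- exists B; split; first exact: num_real.
  move=> M BM u /= Au.
  apply: le_trans (HB u _) _; first by move: Au; rewrite in_itv.
  exact: ltW.
Qed.

Lemma int_xt (a b : R) : mu.-integrable `[a, b[ (EFin \o xt).
Proof.
apply: int_bounded; first exact: mxt.
have [B HB] := xt_bound a b; exists B => u /andP[au ub]; apply: HB.
by rewrite au ltW.
Qed.

Lemma int_cst (c a b : R) : mu.-integrable `[a, b[ (EFin \o (fun=> c)).
Proof.
apply: int_bounded; first exact: measurable_cst.
by exists `|c|.
Qed.

Definition Iab (a b : R) := \int[mu]_(u in `[a, b[) xt u.

Lemma Iab_split a b c : a <= b -> b <= c -> Iab a c = Iab a b + Iab b c.
Proof.
move=> ab bc.
have E : `[a, c[%classic = `[a, b[%classic `|` `[b, c[%classic.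
  by apply: itv_bndbnd_setU; rewrite bnd_simp.
rewrite /Iab E Rintegral_setU //; first by rewrite -E; exact: int_xt.
apply/disj_setPS => u [] /=; rewrite !in_itv /= => /andP[_ ub] /andP[bu _].
by move: (lt_le_trans ub bu); rewrite ltxx.
Qed.

Lemma Iab_empty a b : b <= a -> Iab a b = 0.
Proof.
move=> ba; rewrite /Iab.
have -> : `[a, b[%classic = set0.
  apply/seteqP; split => u //= /[!in_itv] /= /andP[au ub].
  by move: (le_lt_trans (le_trans ba au) ub); rewrite ltxx.
exact: Rintegral_set0.
Qed.

Definition Fx t := Iab 0 t - Iab t 0.

Lemma Fx_diff a b : a <= b -> Fx b - Fx a = Iab a b.
Proof.
move=> ab; rewrite /Fx.
have [a0|a0] := leP 0 a.
  rewrite (Iab_empty (b := 0) (le_trans a0 ab)) (Iab_empty a0) (Iab_split a0 ab); ring.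
have [b0|b0] := leP 0 b.
  rewrite (Iab_empty (b := 0) b0) (Iab_empty (a := 0) (ltW a0)) (Iab_split (ltW a0) b0); ring.
rewrite (Iab_empty (a := 0) (ltW b0)) (Iab_empty (a := 0) (ltW a0)) (Iab_split ab (ltW b0)); ring.
Qed.

Lemma mu_ab a b : a <= b -> fine (mu `[a, b[%classic) = b - a.
Proof.
move=> ab; have := @lebesgue_measure_itv R `[a, b[%R => /= ->.
case: ifP => /= [_|]; first by [].
rewrite lte_fin => /negbT; rewrite -leNgt => ba.
have -> : b = a by apply/le_anti; rewrite ab ba.
by rewrite subrr.
Qed.

Lemma Iab_bnd a b c e : a <= b -> (forall u, a <= u < b -> `|xt u - c| <= e) ->
  `|Iab a b - c * (b - a)| <= e * (b - a).
Proof.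
move=> ab H.
have m : measurable (`[a, b[%classic : set R) by [].
have lo : \int[mu]_(u in `[a, b[) (c - e) <= Iab a b.
  apply: le_Rintegral => //; [exact: int_cst | exact: int_xt |].
  move=> u /= /[!in_itv] /= uu; have := H u uu; rewrite ler_norml; lra.
have hi : Iab a b <= \int[mu]_(u in `[a, b[) (c + e).
  apply: le_Rintegral => //; [exact: int_xt | exact: int_cst |].
  move=> u /= /[!in_itv] /= uu; have := H u uu; rewrite ler_norml; lra.
rewrite !Rintegral_cst // mu_ab // in lo hi.
rewrite ler_norml; apply/andP; split; lra.
Qed.

Lemma Fx_anti : delta_antideriv TS Fx x.
Proof.
move=> t Tt e e0.
have [d d0 Hd] := cont_ed Tt e0.
exists d => // s Ts ts.
have [Tsg tsg sgmin] := fjump_props T0 TSne TScl per t.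
move: Tsg tsg sgmin; move: (fjump TS t) => sg Tsg tsg sgmin.
have gbP := gb_props T0 TSne TScl per.
have [ssg|sgs] := leP s sg.
- have -> : `|sg - s| = sg - s by rewrite ger0_norm // subr_ge0.
  rewrite Fx_diff //.
  apply: Iab_bnd => // u /andP[su usg].
  have [Tp pu pmax] := gbP u.
  rewrite /xt distrC; apply: Hd => //.
  have [ut|tu] := leP u t.
    have sp : s <= gb TS u by apply: pmax.
    have st : s <= t by apply: le_trans su ut.
    have -> : `|t - gb TS u| = t - gb TS u by rewrite ger0_norm // subr_ge0 (le_trans pu ut).
    have e1 : `|t - s| = t - s by rewrite ger0_norm // subr_ge0.
    rewrite e1 in ts; lra.
  have tp : t <= gb TS u by apply: pmax => //; exact: ltW.
  have pt : gb TS u = t.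
    apply/le_anti; rewrite tp andbT; rewrite leNgt; apply/negP => tp'.
    have := sgmin _ Tp tp'; lra.
  by rewrite pt subrr normr0.
- have -> : Fx sg - Fx s = - (Fx s - Fx sg) by ring.
  rewrite Fx_diff; last exact: ltW.
  have -> : - Iab sg s - x t * (sg - s) = - (Iab sg s - x t * (s - sg)) by ring.
  have -> : `|sg - s| = s - sg by rewrite distrC ger0_norm // subr_ge0 ltW.
  rewrite normrN.
  apply: Iab_bnd; first exact: ltW.
  move=> u /andP[sgu us].
  have [Tp pu pmax] := gbP u.
  rewrite /xt distrC; apply: Hd => //.
  have sgp : sg <= gb TS u by apply: pmax.
  have ts' : t < s by apply: le_lt_trans tsg sgs.
  have -> : `|t - gb TS u| = gb TS u - t by rewrite distrC ger0_norm // subr_ge0 (le_trans tsg sgp).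
  have e1 : `|t - s| = s - t by rewrite distrC ger0_norm // subr_ge0 ltW.
  rewrite e1 in ts; lra.
Qed.

End Anti.

Theorem mainTheorem2 (R : realType) (TS : set R) (T : R) :
  0 < T -> time_scale TS -> periodic_ts TS T ->
  (forall x xd : R -> R, C1T TS T x xd ->
     ts_supnorm TS T (fun t => x t - ts_mean TS T x) <= T / 2 * ts_supnorm TS T xd)
  /\ k_ts TS T <= T / 2.
Proof.
move=> T0 [TSne TScl] per.
have Hex : forall x : R -> R, {within TS, continuous x} -> exists F, delta_antideriv TS F x.
  by move=> x cx; exists (Fx TS x); exact: (Fx_anti T0 TSne TScl per cx).
have MP := mainpart T0 TSne TScl per Hex.
split => //.
rewrite /k_ts.
have hl : has_lbound [set k | 0 <= k /\ forall x xd, C1T TS T x xd ->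
        ts_supnorm TS T (fun t => x t - ts_mean TS T x) <= k * ts_supnorm TS T xd].
  by exists 0 => k [].
apply: (ge_inf hl); split; last exact: MP.
lra.
Qed.
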